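(* Let $\mathcal E=\{p_1,\dots,p_n\}\subseteq\mathbb K[x,y_1,\dots,y_n]$ be a set of $n$ polynomials, regarded as a vector. Let $\bar r_0\in\mathbb K^n$ be such that $\mathcal E(0,\bar r_0)=0$ and the matrix $(\nabla^{\eth}_{\bar y}\mathcal E)(0,\bar r_0,\bar r_0)\in\mathbb K^{n\times n}$ is invertible. Then there is a unique stream solution $\bar\sigma\in\Sigma^n$ of $\mathcal E$ with $\bar\sigma(0)=\bar r_0$. Moreover, $(\nabla^{\eth}_{\bar y}\mathcal E)(X,\bar r_0,\bar\sigma)$ is invertible in $\Sigma^{n\times n}$ and $\bar\sigma$ satisfies $$\bar\sigma'^{T}=-\big(\nabla^{\eth}_{\bar y}\mathcal E\big)(X,\bar r_0,\bar\sigma)^{-1}\cdot\Big(\frac{\eth\mathcal E}{\eth x}(X,\bar\sigma)\Big)^{T},\qquad \bar\sigma(0)=\bar r_0.$$ Furthermore, there exist polynomials $P_1,\dots,P_{n+1}\in\mathbb K[x,y_1,\dots,y_n,w]$ (with $w$ a new variable) and an initial value $c\in\mathbb K$, constructed from $\mathcal E$ and $\bar r_0$, such that the polynomial stream differential equation initial value problem $y_i'=P_i$, $y_i(0)=r_{0i}$ ($i=1,\dots,n$), $w'=P_{n+1}$, $w(0)=c$ has as unique solution $(\bar\sigma,\tau)$ for a suitable stream $\tau$.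
   Context: $\mathbb K$ is a field of characteristic $0$; streams $\Sigma=\mathbb K^\omega$ with pointwise sum, convolution product $(\sigma\times\tau)(i)=\sum_{j=0}^{i}\sigma(j)\tau(i-j)$, scalars identified with $(r,0,0,\dots)$, $X=(0,1,0,\dots)$, stream derivative $\sigma'(i)=\sigma(i+1)$. A stream solution of $\mathcal E$ is $\bar\sigma\in\Sigma^n$ with $p(X,\bar\sigma)=0$ for all $p\in\mathcal E$ ($x\mapsto X$, $y_i\mapsto\sigma_i$). A solution of a polynomial stream differential equation initial value problem $y_i'=P_i$, $y_i(0)=r_i$ is a tuple of streams $\bar\sigma$ with $\sigma_i'=P_i(X,\bar\sigma)$, $\sigma_i(0)=r_i$. Syntactic stream derivative of $p\in\mathbb K[x,\bar y]$: with new indeterminates $y_{0i},y_i'$, $y_0:=x$, $y_{00}:=0$, total order $y_0<y_1<\dots<y_n$, $\min(m)$ the least variable in monomial $m\ne1$: $(1)'=0$, $(x)'=1$, $(y_i)'=y_i'$, $(y_im)'=y_i'm+y_{0i}(m)'$ when $m\ne1$ and $y_i=\min(y_im)$, extended linearly. Writing uniquely $p'=q_0+\sum_{i=1}^nq_iy_i'$ with $q_j\in\mathbb K[x,\bar y_0,\bar y]$, set $\frac{\eth p}{\eth x}:=q_0$ (lies in $\mathbb K[x,\bar y]$) and $\frac{\eth p}{\eth y_i}:=q_i$. $\nabla^{\eth}_{\bar y}\mathcal E$ is the $n\times n$ polynomial matrix with entries $\frac{\eth p_i}{\eth y_j}$, and $\frac{\eth\mathcal E}{\eth x}=(\frac{\eth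 p_1}{\eth x},\dots,\frac{\eth p_n}{\eth x})$. $(\nabla^{\eth}_{\bar y}\mathcal E)(0,\bar r_0,\bar r_0)$ means evaluation at $x=0$, $\bar y_0=\bar r_0$, $\bar y=\bar r_0$; evaluation at $(X,\bar r_0,\bar\sigma)$ substitutes $x\mapsto X$, $y_{0i}\mapsto r_{0i}$, $y_i\mapsto\sigma_i$. *)

(* Defs.v *)
From HB Require Import structures.
From mathcomp Require Import all_boot all_order all_algebra.
From mathcomp Require Import boolp.
From mathcomp Require Import mpoly.

Set Implicit Arguments.
Unset Strict Implicit.
Unset Printing Implicit Defensive.

Import Order.TTheory GRing.Theory.
Local Open Scope ring_scope.

Section Streams.
Context (R : comNzRingType).

Definition stream := nat -> R.

HB.instance Definition _ := gen_eqMixin stream.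
HB.instance Definition _ := gen_choiceMixin stream.

Definition szero : stream := fun _ => 0.
Definition sopp (s : stream) : stream := fun i => - s i.
Definition sadd (s t : stream) : stream := fun i => s i + t i.

Lemma saddA : associative sadd.
Proof. by move=> s t u; apply/funext => i; rewrite /sadd addrA. Qed.
Lemma saddC : commutative sadd.
Proof. by move=> s t; apply/funext => i; rewrite /sadd addrC. Qed.
Lemma sadd0 : left_id szero sadd.
Proof. by move=> s; apply/funext => i; rewrite /sadd add0r. Qed.
Lemma saddN : left_inverse szero sopp sadd.
Proof. by move=> s; apply/funext => i; rewrite /sadd /sopp addNr. Qed.

HB.instance Definition _ := GRing.isZmodule.Build stream saddA saddC sadd0 saddN.

(* scalars r are identified with the stream (r, 0, 0, ...) *)
Definition sconst (r : R) : stream := fun i => if i is 0%N then r else 0.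

Definition smul (s t : stream) : stream :=
  fun i => \sum_(j < i.+1) s j * t (i - j)%N.

Definition sone : stream := sconst 1.

Local Definition pol (s : stream) (i : nat) : {poly R} := \poly_(j < i.+1) s j.

Local Lemma smulE s t i : smul s t i = (pol s i * pol t i)`_i.
Proof.
rewrite coefM; apply: eq_bigr => j _.
by rewrite !coef_poly ltn_ord ltnS leq_subr.
Qed.

Local Lemma coefM_eq (p q p' q' : {poly R}) i :
  (forall j, (j <= i)%N -> p`_j = q`_j) -> (forall j, (j <= i)%N -> p'`_j = q'`_j) ->
  (p * p')`_i = (q * q')`_i.
Proof.
move=> H H'; rewrite !coefM; apply: eq_bigr => j _.
by rewrite H ?H' ?leq_subr // -ltnS.
Qed.

Local Lemma pol_smul s t i j : (j <= i)%N ->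
  (pol (smul s t) i)`_j = (pol s i * pol t i)`_j.
Proof.
move=> Hj; rewrite coef_poly ltnS Hj smulE.
by apply: coefM_eq => k Hk; rewrite !coef_poly !ltnS Hk (leq_trans Hk Hj).
Qed.

Lemma smulA : associative smul.
Proof.
move=> s t u; apply/funext => i; rewrite !smulE.
transitivity ((pol s i * (pol t i * pol u i))`_i).
  by apply: coefM_eq => // j Hj; rewrite pol_smul.
by rewrite mulrA; apply: coefM_eq => // j Hj; rewrite pol_smul.
Qed.

Lemma smulC : commutative smul.
Proof. by move=> s t; apply/funext => i; rewrite !smulE mulrC. Qed.

Lemma smul1 : left_id sone smul.
Proof.
move=> s; apply/funext => i; rewrite smulE.
transitivity ((1 * pol s i)`_i); last by rewrite mul1r coef_poly ltnSn.
apply: coefM_eq => // j Hj; rewrite coef_poly ltnS Hj coef1.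
by case: j Hj.
Qed.

Lemma smulDl : left_distributive smul sadd.
Proof.
move=> s t u; apply/funext => i; rewrite /smul /sadd -big_split /=.
by apply: eq_bigr => j _; rewrite mulrDl.
Qed.

Lemma sone_neq0 : sone != szero.
Proof.
apply/eqP => /(congr1 (fun f => f 0%N)) /= /eqP.
by rewrite oner_eq0.
Qed.

HB.instance Definition _ :=
  GRing.Zmodule_isComNzRing.Build stream smulA smulC smul1 smulDl sone_neq0.

Definition sX : stream := fun i => if i == 1%N then 1 else 0.

Definition sderiv (s : stream) : stream := fun i => s i.+1.

End Streams.

(*  {mpoly K[n.+1]} : K[x, y_1..y_n]; variable ord0 is x, variable      *)
(*                    lift ord0 i is y_(i+1)   (i : 'I_n)                *)
(*  Poly0 K n       : K[x, y0_1..y0_n, y_1..y_n], represented as        *)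
(*                    {mpoly {mpoly K[n]}[n.+1]}: the inner variables   *)
(*                    are y0_1..y0_n, the outer ones x, y_1..y_n         *)
(*  DPoly K n       : K[x, y0_bar, y_bar, y'_1..y'_n], represented as   *)
(*                    {mpoly (Poly0 K n)[n]} with outer variables y'_i   *)
Section SyntacticDerivative.
Context (K : fieldType) (n : nat).

Definition Poly0 := {mpoly {mpoly K[n]}[n.+1]}.
Definition DPoly := {mpoly Poly0[n]}.

(* y_0 := x, and y_00 := 0 *)
Definition yv0 (i : 'I_n.+1) : DPoly :=
  match unlift ord0 i with
  | None => 0
  | Some j => ((('X_j : {mpoly K[n]})%:MP : Poly0)%:MP)
  end.

Definition yd (i : 'I_n.+1) : DPoly :=
  match unlift ord0 i with
  | None => 1
  | Some j => 'X_j
  end.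

Definition monD (m : 'X_{1..n.+1}) : DPoly := (('X_[m] : Poly0)%:MP).

Definition minvar (m : 'X_{1..n.+1}) : option 'I_n.+1 :=
  [pick i : 'I_n.+1 | (m i != 0%N) && [forall j : 'I_n.+1, (j < i)%N ==> (m j == 0%N)]].

(* syntactic stream derivative of a monomial; k is a fuel, k = mdeg m  *)
Fixpoint sder_mon (k : nat) (m : 'X_{1..n.+1}) : DPoly :=
  match k with
  | 0%N => 0
  | k'.+1 =>
    match minvar m with
    | None => 0
    | Some i =>
      let m1 := (m - U_(i))%MM in
      if m1 == 0%MM then yd i
      else yd i * monD m1 + yv0 i * sder_mon k' m1
    end
  end.

Definition sder (p : {mpoly K[n.+1]}) : DPoly :=
  \sum_(m <- msupp p)
     ((((p@_m)%:MP : {mpoly K[n]})%:MP : Poly0)%:MP) * sder_mon (mdeg m) m.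

(* writing p' = q_0 + sum_i q_i y_i' :                                  *)
(*   eth p / eth x  := q_0,   eth p / eth y_i := q_i                    *)
Definition eth_x (p : {mpoly K[n.+1]}) : Poly0 := (sder p)@_0%MM.
Definition eth_y (p : {mpoly K[n.+1]}) (i : 'I_n) : Poly0 := (sder p)@_U_(i).

End SyntacticDerivative.

Section Evaluation.
Context (K : fieldType).

Definition pt {k : nat} (x : K) (y : 'I_k -> K) : 'I_k.+1 -> K :=
  fun i => match unlift ord0 i with None => x | Some j => y j end.

Definition spt {k : nat} (s : 'I_k -> stream K) : 'I_k.+1 -> stream K :=
  fun i => match unlift ord0 i with None => sX K | Some j => s j end.

Definition seval {k : nat} (p : {mpoly K[k.+1]}) (s : 'I_k -> stream K) : stream K :=
  mmap (@sconst K) (spt s) p.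

Definition eval0 {n : nat} (q : Poly0 K n) (x : K) (r0 r : 'I_n -> K) : K :=
  meval (pt x r) (map_mpoly (meval r0) q).

Definition seval0 {n : nat} (q : Poly0 K n) (r0 : 'I_n -> K) (s : 'I_n -> stream K)
  : stream K :=
  seval (map_mpoly (meval r0) q) s.

Definition stream_solution {n : nat} (E : 'I_n -> {mpoly K[n.+1]})
  (s : 'I_n -> stream K) : Prop :=
  forall i, seval (E i) s = 0.

Definition psde_solution {k : nat} (P : 'I_k -> {mpoly K[k.+1]}) (r : 'I_k -> K)
  (s : 'I_k -> stream K) : Prop :=
  forall i, sderiv (s i) = seval (P i) s /\ s i 0%N = r i.

Definition ethJ0 {n : nat} (E : 'I_n -> {mpoly K[n.+1]}) (r0 : 'I_n -> K) : 'M[K]_n :=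
  \matrix_(i, j) eval0 (eth_y (E i) j) 0 r0 r0.

Definition ethJ {n : nat} (E : 'I_n -> {mpoly K[n.+1]}) (r0 : 'I_n -> K)
  (s : 'I_n -> stream K) : 'M[stream K]_n :=
  \matrix_(i, j) seval0 (eth_y (E i) j) r0 s.

Definition ethX {n : nat} (E : 'I_n -> {mpoly K[n.+1]}) (r0 : 'I_n -> K)
  (s : 'I_n -> stream K) : 'cV[stream K]_n :=
  \col_i seval0 (eth_x (E i)) r0 s.

Definition snoc {T : Type} {k : nat} (a : 'I_k -> T) (b : T) : 'I_k.+1 -> T :=
  fun i => match unlift ord_max i with Some j => a j | None => b end.

End Evaluation.

(* Main.v *)
Require Import Defs.
From HB Require Import structures.
From mathcomp Require Import all_boot all_order all_algebra.
From mathcomp Require Import boolp.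
From mathcomp Require Import mpoly.

Set Implicit Arguments.
Unset Strict Implicit.
Unset Printing Implicit Defensive.
Import Order.TTheory GRing.Theory.
Local Open Scope ring_scope.


Section StreamFacts.
Context (R : comNzRingType).
Implicit Types s t : stream R.

Lemma saddE s t i : (s + t) i = s i + t i. Proof. by []. Qed.
Lemma soppE s i : (- s) i = - s i. Proof. by []. Qed.
Lemma s0E i : (0 : stream R) i = 0. Proof. by []. Qed.
Lemma smulE' s t i : (s * t) i = \sum_(j < i.+1) s j * t (i - j)%N. Proof. by []. Qed.
Lemma s1E i : (1 : stream R) i = if i is 0%N then 1 else 0. Proof. by []. Qed.
Lemma ssubE s t i : (s - t) i = s i - t i. Proof. by []. Qed.

Lemma sumsE I (r : seq I) (P : pred I) (F : I -> stream R) i :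
  (\sum_(j <- r | P j) F j) i = \sum_(j <- r | P j) F j i.
Proof.
elim/big_rec2: _ => // j a b _ <-; by rewrite saddE.
Qed.

Lemma stream_ext s t : s 0%N = t 0%N -> sderiv s = sderiv t -> s = t.
Proof.
move=> h0 hd; apply/funext => -[|i] //.
by have := congr1 (fun f => f i) hd.
Qed.

Lemma sconst_is_additive : additive (@sconst R).
Proof. by move=> a b; apply/funext => -[|i]; rewrite ssubE /sconst ?subr0. Qed.

Lemma sconst_is_multiplicative : multiplicative (@sconst R).
Proof.
split => //; move=> a b; apply/funext => i; rewrite smulE'.
case: i => [|i]; first by rewrite big_ord1.
rewrite big_ord_recl /= big1 ?addr0 ?mulr0 // => j _.
by rewrite /sconst /= mul0r.
Qed.

HB.instance Definition _ := GRing.isAdditive.Build R (stream R) (@sconst R)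
  sconst_is_additive.
HB.instance Definition _ := GRing.isMultiplicative.Build R (stream R) (@sconst R)
  sconst_is_multiplicative.

Definition ev0 (s : stream R) : R := s 0%N.

Lemma ev0_is_additive : additive ev0.
Proof. by []. Qed.
Lemma ev0_is_multiplicative : multiplicative ev0.
Proof. by split => // a b; rewrite /ev0 smulE' big_ord1. Qed.
HB.instance Definition _ := GRing.isAdditive.Build (stream R) R ev0
  ev0_is_additive.
HB.instance Definition _ := GRing.isMultiplicative.Build (stream R) R ev0
  ev0_is_multiplicative.

Lemma sderivD s t : sderiv (s + t) = sderiv s + sderiv t. Proof. by []. Qed.
Lemma sderivN s : sderiv (- s) = - sderiv s. Proof. by []. Qed.
Lemma sderivB s t : sderiv (s - t) = sderiv s - sderiv t. Proof. by []. Qed.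
Lemma sderiv0 : sderiv (0 : stream R) = 0. Proof. by []. Qed.
Lemma sderivC (c : R) : sderiv (sconst c) = 0. Proof. by []. Qed.
Lemma sderiv1 : sderiv (1 : stream R) = 0. Proof. by []. Qed.
Lemma sderivX : sderiv (sX R) = 1.
Proof. by apply/funext => -[|i]. Qed.

Lemma sderiv_sum I (r : seq I) (P : pred I) (F : I -> stream R) :
  sderiv (\sum_(j <- r | P j) F j) = \sum_(j <- r | P j) sderiv (F j).
Proof. by elim/big_rec2: _ => // j a b _ <-. Qed.

Lemma sderivM s t : sderiv (s * t) = sderiv s * t + sconst (s 0%N) * sderiv t.
Proof.
apply/funext => i; rewrite /sderiv saddE !smulE' big_ord_recl /= subn0.
rewrite addrC; congr (_ + _).
rewrite big_ord_recl /= big1 ?addr0 ?subn0 // => j _.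
by rewrite /sconst /= mul0r.
Qed.

Lemma sderivCM (c : R) s : sderiv (sconst c * s) = sconst c * sderiv s.
Proof. by rewrite sderivM sderivC mul0r add0r. Qed.

End StreamFacts.


Section Causal.
Context (R : comNzRingType).
Implicit Types s t : stream R.

Definition eqk (j : nat) s t := forall l, (l <= j)%N -> s l = t l.

Lemma eqk_refl j s : eqk j s s. Proof. by []. Qed.
Lemma eqk_sym j s t : eqk j s t -> eqk j t s.
Proof. by move=> h l hl; rewrite h. Qed.
Lemma eqk_trans j s t u : eqk j s t -> eqk j t u -> eqk j s u.
Proof. by move=> h1 h2 l hl; rewrite h1 ?h2. Qed.
Lemma eqk_le j j' s t : (j' <= j)%N -> eqk j s t -> eqk j' s t.
Proof. by move=> hj h l hl; apply: h; apply: leq_trans hl hj. Qed.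
Lemma eqkD j s s' t t' : eqk j s s' -> eqk j t t' -> eqk j (s + t) (s' + t').
Proof. by move=> h1 h2 l hl; rewrite !saddE h1 ?h2. Qed.
Lemma eqkN j s s' : eqk j s s' -> eqk j (- s) (- s').
Proof. by move=> h l hl; rewrite !soppE h. Qed.
Lemma eqkM j s s' t t' : eqk j s s' -> eqk j t t' -> eqk j (s * t) (s' * t').
Proof.
move=> h1 h2 l hl; rewrite !smulE'; apply: eq_bigr => i _.
have hi : (i <= j)%N by rewrite (leq_trans _ hl) // -ltnS.
by rewrite h1 // h2 // (leq_trans (leq_subr _ _) hl).
Qed.
Lemma eqkX j s s' m : eqk j s s' -> eqk j (s ^+ m) (s' ^+ m).
Proof.
by move=> h; elim: m => [|m ih]; rewrite ?expr0 // !exprS; apply: eqkM.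
Qed.

Section ODE.
Context (k : nat) (F : ('I_k -> stream R) -> 'I_k -> stream R) (r : 'I_k -> R).

Definition causal := forall j (a b : 'I_k -> stream R), (forall i, eqk j (a i) (b i)) ->
  forall i, eqk j (F a i) (F b i).

Definition ode_sol (s : 'I_k -> stream R) :=
  forall i, sderiv (s i) = F s i /\ s i 0%N = r i.

Hypothesis hF : causal.

Fixpoint approx (m : nat) : 'I_k -> stream R :=
  match m with
  | 0%N => fun i => sconst (r i)
  | m'.+1 => fun i l => if l is l'.+1 then F (approx m') i l' else r i
  end.

Lemma approx_step m : forall i, eqk m (approx m.+1 i) (approx m i).
Proof.
elim: m => [|m ih] i [|l] //=.
all: try move=> hl; exact: (hF ih i hl).
Qed.

Lemma approx_mono m p : (m <= p)%N -> forall i, eqk m (approx p i) (approx m i).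
Proof.
elim: p => [|p ih]; first by rewrite leqn0 => /eqP -> i.
rewrite leq_eqVlt => /orP [/eqP -> //|hm] i.
rewrite ltnS in hm.
exact: (eqk_trans (eqk_le hm (@approx_step p i)) (ih hm i)).
Qed.

Definition odesol : 'I_k -> stream R := fun i l => approx l i l.

Lemma odesol_approx m i : eqk m (odesol i) (approx m i).
Proof. by move=> l hl; rewrite /odesol (approx_mono hl). Qed.

Lemma ode_exists : ode_sol odesol.
Proof.
move=> i; split => //; apply/funext => l.
rewrite /sderiv /odesol /=.
by rewrite (@hF l _ _ (fun j => @odesol_approx l j) i l (leqnn l)).
Qed.

Lemma ode_unique (s t : 'I_k -> stream R) : ode_sol s -> ode_sol t -> s = t.
Proof.
move=> hs ht.
suff h : forall m i, eqk m (s i) (t i).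
  by apply/funext => i; apply/funext => l; apply: (h l).
elim => [|m ih] i [|l] hl //.
- by rewrite (hs i).2 (ht i).2.
- by rewrite (hs i).2 (ht i).2.
have := congr1 (fun f => f l) (hs i).1; rewrite /sderiv => ->.
have := congr1 (fun f => f l) (ht i).1; rewrite /sderiv => ->.
by apply: hF.
Qed.

End ODE.
End Causal.


Section Seval.
Context (K : fieldType) (k : nat).
Implicit Types (p q : {mpoly K[k.+1]}) (s t : 'I_k -> stream K).

Lemma sevalD p q s : seval (p + q) s = seval p s + seval q s.
Proof. by rewrite /seval rmorphD. Qed.
Lemma sevalN p s : seval (- p) s = - seval p s.
Proof. by rewrite /seval rmorphN. Qed.
Lemma sevalB p q s : seval (p - q) s = seval p s - seval q s.
Proof. by rewrite /seval rmorphB. Qed.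
Lemma sevalM p q s : seval (p * q) s = seval p s * seval q s.
Proof. by rewrite /seval rmorphM. Qed.
Lemma sevalC c s : seval c%:MP s = sconst c.
Proof. by rewrite /seval mmapC. Qed.
Lemma seval1 s : seval 1 s = 1.
Proof. by rewrite /seval rmorph1. Qed.
Lemma seval_sum I (r : seq I) (P : pred I) (F : I -> {mpoly K[k.+1]}) s :
  seval (\sum_(i <- r | P i) F i) s = \sum_(i <- r | P i) seval (F i) s.
Proof. by rewrite /seval rmorph_sum. Qed.
Lemma sevalXU i s : seval 'X_i s = spt s i.
Proof. by rewrite /seval mmapX mmap1U. Qed.

Lemma seval_causal j p s t : (forall i, eqk j (s i) (t i)) ->
  eqk j (seval p s) (seval p t).
Proof.
move=> h; rewrite /seval /mmap.
apply: (big_ind2 (eqk j)) => //; first exact: eqkD.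
move=> m _; apply: eqkM => //; rewrite /mmap1.
apply: (big_ind2 (eqk j)) => //; first exact: eqkM.
move=> i _; apply: eqkX; rewrite /spt.
by case: (unlift ord0 i) => // a; apply: h.
Qed.

Lemma ev0_seval p s :
  (seval p s) 0%N = meval (pt 0 (fun j => s j 0%N)) p.
Proof.
rewrite /seval /mmap mevalE -/(ev0 _) rmorph_sum /=; apply: eq_bigr => m _.
rewrite rmorphM /= /mmap1 rmorph_prod; congr (_ * _); apply: eq_bigr => i _.
rewrite rmorphXn /= /ev0 /spt /pt; congr (_ ^+ _).
by case: (unlift ord0 i).
Qed.

End Seval.


Section LinCoef.
Context (R : nzRingType) (n : nat) (a : R) (b : 'I_n -> R).
Lemma lin_coef0 : (a%:MP + \sum_j (b j)%:MP * 'X_j : {mpoly R[n]})@_0%MM = a.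
Proof.
rewrite mcoeffD mcoeffC eqxx mulr1 raddf_sum /= big1 ?addr0 // => j _.
by rewrite mcoeffCM mcoeffX mnm1_eq0 mulr0.
Qed.
Lemma lin_coefU i : (a%:MP + \sum_j (b j)%:MP * 'X_j : {mpoly R[n]})@_U_(i) = b i.
Proof.
rewrite mcoeffD mcoeffC mnm1_eq0 mulr0 add0r raddf_sum /=.
rewrite (bigD1 i) //= mcoeffCM mcoeffXU eqxx mulr1 big1 ?addr0 // => j hj.
by rewrite mcoeffCM mcoeffXU (negbTE hj) mulr0.
Qed.
End LinCoef.

Section Deriv.
Context (K : fieldType) (n : nat) (r0 : 'I_n -> K) (s : 'I_n -> stream K).
Hypothesis hs0 : forall j, s j 0%N = r0 j.

Definition f0 (c : Poly0 K n) : stream K := seval0 c r0 s.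

Lemma f0_is_additive : additive f0.
Proof. by move=> a b; rewrite /f0 /seval0 rmorphB sevalB. Qed.
Lemma f0_is_multiplicative : multiplicative f0.
Proof. by split=> [a b|]; rewrite /f0 /seval0 ?rmorphM ?sevalM // rmorph1 seval1. Qed.
HB.instance Definition _ := GRing.isAdditive.Build (Poly0 K n) (stream K) f0
  f0_is_additive.
HB.instance Definition _ := GRing.isMultiplicative.Build (Poly0 K n) (stream K) f0
  f0_is_multiplicative.

Definition evD (q : DPoly K n) : stream K := mmap f0 (fun j => sderiv (s j)) q.

Lemma evD_is_additive : additive evD.
Proof. by move=> a b; rewrite /evD rmorphB. Qed.
Lemma evD_is_multiplicative : multiplicative evD.
Proof. by split=> [a b|]; rewrite /evD ?rmorphM // rmorph1. Qed.
Lemma evDD a b : evD (a + b) = evD a + evD b.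
Proof. by rewrite /evD rmorphD. Qed.
Lemma evDM a b : evD (a * b) = evD a * evD b.
Proof. by rewrite /evD rmorphM. Qed.
Lemma evD0 : evD 0 = 0.
Proof. by rewrite /evD rmorph0. Qed.
Lemma evD1 : evD 1 = 1.
Proof. by rewrite /evD rmorph1. Qed.
Lemma evD_sum I (r : seq I) (P : pred I) (F : I -> DPoly K n) :
  evD (\sum_(i <- r | P i) F i) = \sum_(i <- r | P i) evD (F i).
Proof. by rewrite /evD rmorph_sum. Qed.

Lemma evDC (c : Poly0 K n) : evD c%:MP = f0 c.
Proof. by rewrite /evD mmapC. Qed.

Lemma evD_C3 (c : K) :
  evD ((((c%:MP : {mpoly K[n]})%:MP : Poly0 K n)%:MP)) = sconst c.
Proof. by rewrite evDC /f0 /seval0 map_mpolyC /= mevalC sevalC. Qed.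

Lemma evD_monD m : evD (monD K m) = mmap1 (spt s) m.
Proof. by rewrite /monD evDC /f0 /seval0 map_mpolyX /seval mmapX. Qed.

Lemma evD_yd i : evD (yd K i) = sderiv (spt s i).
Proof.
rewrite /yd /spt; case: (unlift ord0 i) => [j|].
  by rewrite /evD mmapX mmap1U.
by rewrite evD1 sderivX.
Qed.

Lemma evD_yv0 i : evD (yv0 K i) = sconst (spt s i 0%N).
Proof.
rewrite /yv0 /spt; case: (unlift ord0 i) => [j|].
  by rewrite evDC /f0 /seval0 map_mpolyC /= mevalXU sevalC hs0.
by rewrite evD0 rmorph0.
Qed.

Lemma minvar_none (m : 'X_{1..n.+1}) : minvar m = None -> m = 0%MM.
Proof.
rewrite /minvar; case: pickP => // h _.
apply/mnmP => i; rewrite mnm0E.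
elim/ltn_ind: (val i) {-2}i (erefl (val i)) => v ih i0 hv.
have := h i0; rewrite /= => /negbT; rewrite negb_and negbK => /orP [/eqP //|].
move/forallPn => [j]; rewrite negb_imply => /andP [hj hmj].
by move: hmj; rewrite (ih (val j)) // -hv.
Qed.

Lemma sder_monE k m : mdeg m = k ->
  evD (sder_mon K k m) = sderiv (mmap1 (spt s) m).
Proof.
elim: k m => [|k ih] m hm.
  have/eqP -> : (m == 0%MM) by rewrite -mdeg_eq0 hm.
  by rewrite /= mmap11 evD0.
rewrite [sder_mon _ _ _]/=.
case e: (minvar m) => [i|]; last first.
  by move: hm; rewrite (minvar_none e) mdeg0.
have hi : (U_(i) <= m)%MM.
  move: e; rewrite /minvar; case: pickP => // i' /andP [hi' _] [<-].
  by rewrite lep1mP.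
set m1 := (m - U_(i))%MM.
have hm1 : m = (m1 + U_(i))%MM by rewrite submK.
have dm1 : mdeg m1 = k by move: hm; rewrite hm1 mdegD mdeg1 addn1 => -[].
have mm : mmap1 (spt s) m = mmap1 (spt s) m1 * spt s i.
  by rewrite hm1 commr_mmap1_M ?mmap1U // => j x; apply: mulrC.
case: ifP => [/eqP e1|_].
  by rewrite mm e1 mmap11 mul1r evD_yd.
rewrite evDD {1}/evD rmorphM [X in _ + X]/evD rmorphM.
change (evD (yd K i) * evD (monD K m1) + evD (yv0 K i) * evD (sder_mon K k m1) = sderiv (mmap1 (spt s) m)).
transitivity (sderiv (spt s i) * mmap1 (spt s) m1 + sconst (spt s i 0%N) * sderiv (mmap1 (spt s) m1)).
  by congr (_ * _ + _ * _); [exact: evD_yd | exact: evD_monD | exact: evD_yv0 | exact: ih].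
by rewrite mm (mulrC (mmap1 _ _)) sderivM.
Qed.

Lemma evD_sder p : evD (sder p) = sderiv (seval p s).
Proof.
rewrite /sder evD_sum /seval /mmap sderiv_sum; apply: eq_bigr => m _.
by rewrite evDM evD_C3 sderivCM sder_monE.
Qed.

Definition islin (q : DPoly K n) := exists (a : Poly0 K n) (b : 'I_n -> Poly0 K n),
  q = a%:MP + \sum_j (b j)%:MP * 'X_j.

Lemma islin0 : islin 0.
Proof.
exists 0, (fun _ => 0); rewrite ?raddf0 add0r big1 // => j _.
by rewrite ?raddf0 mul0r.
Qed.

Lemma islinD q1 q2 : islin q1 -> islin q2 -> islin (q1 + q2).
Proof.
move=> [a1 [b1 ->]] [a2 [b2 ->]]; exists (a1 + a2), (fun j => b1 j + b2 j).
rewrite raddfD addrACA -big_split /=; congr (_ + _); apply: eq_bigr => j _.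
by rewrite raddfD mulrDl.
Qed.

Lemma islinCM (c : Poly0 K n) q : islin q -> islin (c%:MP * q).
Proof.
move=> [a [b ->]]; exists (c * a), (fun j => c * b j).
rewrite mulrDr mulr_sumr (mpolyCM n c a).
apply: f_equal2 (erefl _) _; apply: eq_bigr => j _.
by rewrite (mpolyCM n c (b j)) mulrA.
Qed.

Lemma islin_yd i : islin (yd K i).
Proof.
rewrite /yd; case: (unlift ord0 i) => [j|].
  exists 0, (fun k => if k == j then 1 else 0).
  rewrite ?raddf0 add0r (bigD1 j) //= eqxx ?rmorph1 mul1r big1 ?addr0 // => k /negbTE ->.
  by rewrite ?raddf0 mul0r.
exists 1, (fun _ => 0); rewrite ?rmorph1 big1 ?addr0 // => j _.
by rewrite ?raddf0 mul0r.
Qed.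

Lemma yv0C i : exists c : Poly0 K n, yv0 K i = c%:MP.
Proof.
rewrite /yv0; case: (unlift ord0 i) => [j|]; first by eexists.
by exists 0; rewrite ?raddf0.
Qed.

Lemma islin_sder_mon k m : islin (sder_mon K k m).
Proof.
elim: k m => [|k ih] m /=; first exact: islin0.
case: (minvar m) => [i|]; last exact: islin0.
case: ifP => _; first exact: islin_yd.
apply: islinD.
  by rewrite /monD mulrC; apply: islinCM; apply: islin_yd.
by have [c ->] := yv0C i; apply: islinCM.
Qed.

Lemma islin_sder p : islin (sder p).
Proof.
rewrite /sder; apply: (big_ind islin); [exact: islin0|exact: islinD|].
move=> m _; apply: islinCM; exact: islin_sder_mon.
Qed.

Lemma evD_lin a (b : 'I_n -> Poly0 K n) :
  evD (a%:MP + \sum_j (b j)%:MP * 'X_j) = f0 a + \sum_j f0 (b j) * sderiv (s j).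
Proof.
rewrite evDD evDC evD_sum; congr (_ + _); apply: eq_bigr => j _.
by rewrite evDM evDC /evD mmapX mmap1U.
Qed.

Lemma seval_deriv p :
  sderiv (seval p s) =
  seval0 (eth_x p) r0 s + \sum_j seval0 (eth_y p j) r0 s * sderiv (s j).
Proof.
rewrite -evD_sder /eth_x /eth_y.
have [a [b e]] := islin_sder p; rewrite e.
rewrite lin_coef0 evD_lin; apply: f_equal2 (erefl _) _; apply: eq_bigr => j _.
by rewrite lin_coefU.
Qed.

End Deriv.


Lemma stream_inv (K : fieldType) (d : stream K) : d 0%N != 0 ->
  exists w : stream K, d * w = 1.
Proof.
move=> hd.
pose F (a : 'I_1 -> stream K) (i : 'I_1) := - (sconst (d 0%N)^-1 * sderiv d * a i).
have hF : causal F.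
  move=> j a b h i; apply: eqkN; apply: eqkM => //.
have := ode_exists (fun _ : 'I_1 => (d 0%N)^-1) hF.
set w := odesol _ _ => hw; exists (w ord0).
have [hw1 hw0] := hw ord0.
apply: stream_ext.
  by rewrite -/(ev0 _) rmorphM /= /ev0 hw0 mulfV.
rewrite (sderivM d) hw1 /F sderiv1 mulrN mulrA mulrA -rmorphM mulfV // rmorph1 mul1r.
by rewrite subrr.
Qed.

Lemma adj_solve (R : comNzRingType) (n : nat) (J : 'M[R]_n) (X ds : 'cV[R]_n) (w : R) :
  \det J * w = 1 ->
  (X + J *m ds = 0) <-> (ds = - (w *: (\adj J *m X))).
Proof.
move=> hdw; split => h.
  have -> : ds = w *: (\adj J *m (J *m ds)).
    by rewrite mulmxA mul_adj_mx mul_scalar_mx scalerA mulrC hdw scale1r.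
  have -> : J *m ds = - X by rewrite -[J *m ds]add0r -(addNr X) -addrA h addr0.
  by rewrite mulmxN scalerN.
rewrite h mulmxN -scalemxAr mulmxA mul_mx_adj mul_scalar_mx scalerA mulrC hdw.
by rewrite scale1r subrr.
Qed.

Lemma mmap_comp (R S : comNzRingType) (k1 k2 : nat)
  (g : {rmorphism {mpoly R[k2]} -> S}) (v : 'I_k1 -> {mpoly R[k2]}) (p : {mpoly R[k1]}) :
  g (mmap (@mpolyC k2 R) v p) = mmap (fun c => g c%:MP) (fun i => g (v i)) p.
Proof.
rewrite /mmap rmorph_sum; apply: eq_bigr => m _.
rewrite rmorphM /mmap1 rmorph_prod; congr (_ * _); apply: eq_bigr => i _.
by rewrite rmorphXn.
Qed.

Lemma mmap_ext (R S : nzRingType) (k : nat) (f1 f2 : R -> S) (h1 h2 : 'I_k -> S)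
  (p : {mpoly R[k]}) : f1 =1 f2 -> h1 =1 h2 -> mmap f1 h1 p = mmap f2 h2 p.
Proof.
move=> ef eh; rewrite /mmap; apply: eq_bigr => m _.
by rewrite ef (mmap1_eq _ eh).
Qed.

Lemma snoc_lift (T : Type) (k : nat) (a : 'I_k -> T) (b : T) (j : 'I_k) :
  snoc a b (lift ord_max j) = a j.
Proof. by rewrite /snoc liftK. Qed.

Lemma snoc_max (T : Type) (k : nat) (a : 'I_k -> T) (b : T) :
  snoc a b ord_max = b.
Proof. by rewrite /snoc unlift_none. Qed.

Lemma snoc_eta (T : Type) (k : nat) (f : 'I_k.+1 -> T) :
  f = snoc (fun j => f (lift ord_max j)) (f ord_max).
Proof.
apply/funext => i; rewrite /snoc.
by case: unliftP => [j ->|->].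
Qed.

Lemma spt_snoc (K : fieldType) (k : nat) (s : 'I_k -> stream K) (w : stream K)
  (i : 'I_k.+1) : spt (snoc s w) (lift ord_max i) = spt s i.
Proof.
rewrite /spt; case: (unliftP ord0 i) => [j ->|->].
  have -> : lift ord_max (lift ord0 j) = lift ord0 (lift ord_max j) :> 'I_k.+2.
    apply: val_inj; rewrite /= /bump /=; have hj := ltn_ord j.
    have -> : (k < 1 + j)%N = false by rewrite add1n ltnS leqNgt hj.
    have -> : (k <= j)%N = false by rewrite leqNgt hj.
    by [].
  by rewrite !liftK snoc_lift.
have -> : lift ord_max ord0 = ord0 :> 'I_k.+2 by apply: val_inj.
by rewrite !unlift_none.
Qed.

Lemma spt_max (K : fieldType) (k : nat) (rho : 'I_k.+1 -> stream K) :
  spt rho ord_max = rho ord_max.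
Proof.
rewrite /spt; have -> : ord_max = lift ord0 (ord_max : 'I_k.+1) :> 'I_k.+2.
  by apply: val_inj.
by rewrite liftK.
Qed.

Section Lift.
Context (K : fieldType) (k : nat).
Definition liftp (p : {mpoly K[k.+1]}) : {mpoly K[k.+2]} :=
  mmap (@mpolyC k.+2 K) (fun i => 'X_(lift ord_max i)) p.

Lemma seval_lift p (s : 'I_k -> stream K) (w : stream K) :
  seval (liftp p) (snoc s w) = seval p s.
Proof.
rewrite /seval /liftp (mmap_comp (mmap (@sconst K) (spt (snoc s w)))).
apply: mmap_ext => [c|i] /=; first by rewrite mmapC.
by rewrite mmapX mmap1U spt_snoc.
Qed.
End Lift.


Lemma aux_inv (R : comNzRingType) (a w b c w' : R) :
  a * w + b * w' = 0 -> c * b = 1 -> w' = - (c * w * a).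
Proof.
move=> h hcb.
have -> : w' = c * (b * w') by rewrite mulrA hcb mul1r.
have -> : b * w' = - (a * w) by rewrite -[b * w']add0r -(addNr (a * w)) -addrA h addr0.
by rewrite mulrN [a * w]mulrC mulrA.
Qed.

Lemma aux_zero (R : comNzRingType) (a w b c : R) :
  b * c = 1 -> a * w + b * - (c * w * a) = 0.
Proof.
move=> h; rewrite mulrN !mulrA h mul1r mulrC subrr //.
Qed.

Lemma smul0 (R : comNzRingType) (a b : stream R) : (a * b) 0%N = a 0%N * b 0%N.
Proof. by rewrite smulE' big_ord1. Qed.

Lemma sconst_inv (K : fieldType) (a : K) : a != 0 ->
  sconst a * sconst a^-1 = 1 /\ sconst a^-1 * sconst a = 1.
Proof. by move=> ha; rewrite -!rmorphM mulfV ?mulVf ?rmorph1. Qed.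

Section Main.
Context (K : fieldType) (n : nat) (E : 'I_n -> {mpoly K[n.+1]}) (r0 : 'I_n -> K).

Definition JP : 'M[{mpoly K[n.+1]}]_n :=
  \matrix_(i, j) map_mpoly (meval r0) (eth_y (E i) j).
Definition XP : 'cV[{mpoly K[n.+1]}]_n :=
  \col_i map_mpoly (meval r0) (eth_x (E i)).
Definition DP : {mpoly K[n.+1]} := \det JP.
Definition AP : 'M[{mpoly K[n.+1]}]_n := \adj JP.
Definition DxP : {mpoly K[n.+1]} := map_mpoly (meval r0) (eth_x DP).
Definition DyP (j : 'I_n) : {mpoly K[n.+1]} := map_mpoly (meval r0) (eth_y DP j).
Definition cst : K := (\det (ethJ0 E r0))^-1.
Definition Wv : {mpoly K[n.+2]} := 'X_(ord_max).
Definition Ps (j : 'I_n) : {mpoly K[n.+2]} :=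
  - (Wv * \sum_k liftp (AP j k) * liftp (XP k ord0)).
Definition Pw : {mpoly K[n.+2]} :=
  - ((cst%:MP * Wv) * (liftp DxP + \sum_j liftp (DyP j) * Ps j)).
Definition PP : 'I_n.+1 -> {mpoly K[n.+2]} := snoc Ps Pw.

Lemma ethJE s : ethJ E r0 s = map_mx (mmap (@sconst K) (spt s)) JP.
Proof. by apply/matrixP => i j; rewrite !mxE. Qed.

Lemma ethXE s : ethX E r0 s = map_mx (mmap (@sconst K) (spt s)) XP.
Proof. by apply/matrixP => i j; rewrite !mxE. Qed.

Lemma detJ s : \det (ethJ E r0 s) = seval DP s.
Proof. by rewrite ethJE det_map_mx. Qed.

Lemma adjJ s : \adj (ethJ E r0 s) = map_mx (mmap (@sconst K) (spt s)) AP.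
Proof. by rewrite ethJE map_mx_adj. Qed.

Lemma sevalPs s w j : seval (Ps j) (snoc s w) =
  (- (w *: (\adj (ethJ E r0 s) *m ethX E r0 s))) j ord0.
Proof.
rewrite /Ps sevalN sevalM /Wv sevalXU spt_max snoc_max seval_sum !mxE.
congr (- (_ * _)); apply: eq_bigr => k _.
by rewrite sevalM !seval_lift adjJ ethXE !mxE.
Qed.

Lemma dDP s : (forall j, s j 0%N = r0 j) ->
  sderiv (seval DP s) = seval DxP s + \sum_j seval (DyP j) s * sderiv (s j).
Proof. move=> hs; exact: seval_deriv. Qed.

Lemma ev0_ethJ s : (forall j, s j 0%N = r0 j) ->
  map_mx (@ev0 K) (ethJ E r0 s) = ethJ0 E r0.
Proof.
move=> hs; apply/matrixP => i j; rewrite !mxE /ev0 /seval0 ev0_seval /eval0.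
by have -> : (fun j => s j 0%N) = r0 by apply/funext => k; rewrite hs.
Qed.

Lemma d0E s : (forall j, s j 0%N = r0 j) -> seval DP s 0%N = \det (ethJ0 E r0).
Proof.
move=> hs; rewrite -detJ -/(ev0 _) -det_map_mx.
by rewrite ev0_ethJ.
Qed.

Lemma G1 s : (forall j, s j 0%N = r0 j) -> forall i,
  sderiv (seval (E i) s) =
  (ethX E r0 s + ethJ E r0 s *m \col_j sderiv (s j)) i ord0.
Proof.
move=> hs i; rewrite (seval_deriv hs) !mxE; congr (_ + _).
by apply: eq_bigr => j _; rewrite !mxE.
Qed.

Hypothesis hE0 : forall i, meval (pt 0 r0) (E i) = 0.
Hypothesis hJ : ethJ0 E r0 \in unitmx.

Lemma hdet : \det (ethJ0 E r0) != 0.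
Proof. by move: hJ; rewrite unitmxE unitfE. Qed.

Lemma E_iff s : (forall j, s j 0%N = r0 j) ->
  stream_solution E s <->
  ethX E r0 s + ethJ E r0 s *m \col_j sderiv (s j) = 0.
Proof.
move=> hs; split => h.
  apply/matrixP => i j; rewrite (ord1 j) -G1 // h mxE.
  by [].
move=> i; apply: stream_ext.
  rewrite ev0_seval.
  by have -> : (fun j => s j 0%N) = r0 by apply/funext => k; rewrite hs.
by rewrite G1 // h mxE.
Qed.

Lemma psde_split (rho : 'I_n.+1 -> stream K) :
  psde_solution PP (snoc r0 cst) rho <->
  (forall j, sderiv (rho (lift ord_max j)) = seval (Ps j) rho /\
             rho (lift ord_max j) 0%N = r0 j) /\
  (sderiv (rho ord_max) = seval Pw rho /\ rho ord_max 0%N = cst).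
Proof.
split.
  move=> h; split; last by have := h ord_max; rewrite /PP !snoc_max.
  by move=> j; have := h (lift ord_max j); rewrite /PP !snoc_lift.
move=> [h1 h2] i; case: (unliftP ord_max i) => [j ->|->].
  by rewrite /PP !snoc_lift.
by rewrite /PP !snoc_max.
Qed.

Lemma sigma_part s w : (forall j, sderiv (s j) = seval (Ps j) (snoc s w)) <->
  \col_j sderiv (s j) = - (w *: (\adj (ethJ E r0 s) *m ethX E r0 s)).
Proof.
split.
  move=> h; apply/matrixP => j k; rewrite (ord1 k) mxE h sevalPs.
  by [].
move=> h j; rewrite sevalPs -h mxE.
by [].
Qed.

Lemma sevalPw s w : (forall j, s j 0%N = r0 j) ->
  (forall j, sderiv (s j) = seval (Ps j) (snoc s w)) ->
  seval Pw (snoc s w) = - (sconst cst * w * sderiv (seval DP s)).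
Proof.
move=> hs h; rewrite /Pw sevalN !sevalM sevalC /Wv sevalXU spt_max snoc_max.
rewrite (dDP hs) sevalD (seval_lift DxP s w) (seval_sum _ _ (fun j => liftp (DyP j) * Ps j)).
apply: (f_equal (fun x => - (sconst cst * w * (seval DxP s + x)))).
by apply: eq_bigr => j _; rewrite sevalM (seval_lift (DyP j) s w) h.
Qed.

Lemma psde_dw (rho : 'I_n.+1 -> stream K) :
  psde_solution PP (snoc r0 cst) rho ->
  seval DP (fun j => rho (lift ord_max j)) * rho ord_max = 1.
Proof.
move/psde_split => [h1 [hw1 hw0]].
set s := fun j => rho (lift ord_max j).
set w := rho ord_max.
have erho : rho = snoc s w by exact: snoc_eta.
have hs : forall j, s j 0%N = r0 j by move=> j; rewrite /s (h1 j).2.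
have hsd : forall j, sderiv (s j) = seval (Ps j) (snoc s w).
  by move=> j; rewrite /s (h1 j).1 -erho.
apply: stream_ext.
  rewrite (smul0 (seval DP s) w) (d0E hs) /w hw0 /cst mulfV //; exact: hdet.
rewrite (sderivM (seval DP s)) sderiv1 /w hw1 erho (sevalPw hs hsd) snoc_max.
apply: (@aux_zero _ (sderiv (seval DP s)) w (sconst (seval DP s 0%N)) (sconst cst)).
by rewrite (d0E hs) /cst; case: (sconst_inv hdet).
Qed.

Lemma KEY s w : (forall j, s j 0%N = r0 j) -> seval DP s * w = 1 ->
  psde_solution PP (snoc r0 cst) (snoc s w) <-> stream_solution E s.
Proof.
move=> hs hdw.
have hdw' : \det (ethJ E r0 s) * w = 1 by rewrite detJ.
split.
  move/psde_split => [h1 _].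
  apply/(E_iff hs)/(adj_solve _ _ hdw')/sigma_part => j.
  by have := (h1 j).1; rewrite snoc_lift.
move/(E_iff hs)/(adj_solve _ _ hdw')/sigma_part => hsd.
apply/psde_split; split.
  by move=> j; rewrite !snoc_lift hsd hs.
rewrite !snoc_max (sevalPw hs hsd); split.
  have := congr1 (@sderiv K) hdw; rewrite (sderivM (seval DP s)) sderiv1.
  move/aux_inv; apply.
  rewrite -rmorphM (d0E hs) /cst mulVf ?rmorph1 //; exact: hdet.
have := congr1 (@ev0 K) hdw; rewrite rmorphM rmorph1 /= /ev0 (d0E hs) => h.
apply: (mulfI hdet); rewrite h /cst mulfV //; exact: hdet.
Qed.

End Main.

Unset Implicit Arguments.

Theorem theorem3p7 (K : fieldType) (n : nat)
  (E : 'I_n -> {mpoly K[n.+1]}) (r0 : 'I_n -> K) :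
  [pchar K] =i pred0 ->
  (forall i, meval (pt 0 r0) (E i) = 0) ->
  ethJ0 E r0 \in unitmx ->
  exists sigma : 'I_n -> stream K,
    [/\ (forall i, sigma i 0%N = r0 i) /\ stream_solution E sigma,
        (forall sigma' : 'I_n -> stream K,
           (forall i, sigma' i 0%N = r0 i) -> stream_solution E sigma' ->
           sigma' = sigma),
        (exists N : 'M[stream K]_n,
           [/\ ethJ E r0 sigma *m N = 1%:M,
               N *m ethJ E r0 sigma = 1%:M &
               \col_i sderiv (sigma i) = - (N *m ethX E r0 sigma)])
      & exists (P : 'I_n.+1 -> {mpoly K[n.+2]}) (c : K) (tau : stream K),
          forall rho : 'I_n.+1 -> stream K,
            psde_solution P (snoc r0 c) rho <-> rho = snoc sigma tau].
Proof.
move=> _ hE0 hJ.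
pose F := fun (rho : 'I_n.+1 -> stream K) (i : 'I_n.+1) => seval (PP E r0 i) rho.
have hF : causal F.
  move=> j a b h i; exact: (seval_causal (PP E r0 i) h).
pose rho0 := odesol F (snoc r0 (cst E r0)).
have hrho : psde_solution (PP E r0) (snoc r0 (cst E r0)) rho0 := ode_exists _ hF.
pose sigma := fun j => rho0 (lift ord_max j).
pose tau := rho0 ord_max.
have erho : rho0 = snoc sigma tau := snoc_eta rho0.
have hs : forall j, sigma j 0%N = r0 j.
  by move=> j; have := ((psde_split E r0 rho0).1 hrho).1 j => -[_].
have hdw : seval (DP E r0) sigma * tau = 1 := psde_dw hJ hrho.
have hsol : stream_solution E sigma.
  by apply: (KEY hE0 hJ hs hdw).1; rewrite -erho.
have hsd : \col_j sderiv (sigma j) =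
    - (tau *: (\adj (ethJ E r0 sigma) *m ethX E r0 sigma)).
  apply/(sigma_part E r0 sigma tau) => j.
  have := ((psde_split E r0 rho0).1 hrho).1 j => -[-> _].
  by rewrite -erho.
have hdw' : \det (ethJ E r0 sigma) * tau = 1 by rewrite detJ.
exists sigma; split.
- by [].
- move=> s' hs' hsol'.
  have hd0 : seval (DP E r0) s' 0%N != 0 by rewrite (d0E E hs'); exact: hdet hJ.
  have [w' hw'] := stream_inv hd0.
  have h' := (KEY hE0 hJ hs' hw').2 hsol'.
  have e : snoc s' w' = rho0 := ode_unique hF h' hrho.
  apply/funext => j.
  by have := congr1 (fun f => f (lift ord_max j)) e; rewrite snoc_lift.
- exists (tau *: \adj (ethJ E r0 sigma)); split.
  + by rewrite -scalemxAr mul_mx_adj scale_scalar_mx mulrC hdw'.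
  + by rewrite -scalemxAl mul_adj_mx scale_scalar_mx mulrC hdw'.
  + by rewrite hsd scalemxAl.
- exists (PP E r0), (cst E r0), tau => rho; split => [h|->].
    by rewrite -erho; exact: (@ode_unique _ _ F (snoc r0 (cst E r0)) hF rho rho0 h hrho).
  by rewrite -erho.
Qed.
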